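(* Let $G$ be a connected simple planar graph with $f_0$ vertices, $f_1$ edges and $f_2$ faces, and let $p(x)=f_2x^3+f_1x^2+f_0x+2$ be its Euler polynomial. Then all roots of $p(x)$ are real if and only if $(f_0+2)^2\ge 8(f_1+2)$, which is in turn equivalent to $(f_0-2)^2\ge 8f_2$.
   Context: All graphs are finite and simple (no loops, no parallel edges). For a connected planar graph, fix a planar embedding; $f_0,f_1,f_2$ denote the numbers of vertices, edges and faces (the unbounded face included), so that Euler's formula $f_0-f_1+f_2=2$ holds. *)

(* Defs.v *)
From HB Require Import structures.
From mathcomp Require Import all_boot all_order all_algebra all_field.
Set Implicit Arguments. Unset Strict Implicit. Unset Printing Implicit Defensive.
Import Order.TTheory GRing.Theory Num.Theory.
Local Open Scope ring_scope.

Definition simple_graph (T : finType) (e : rel T) : Prop :=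
  symmetric e /\ irreflexive e.

Definition connected_graph (T : finType) (e : rel T) : Prop :=
  (0 < #|T|)%N /\ forall x y : T, connect e x y.

Notation dart e := {p : _ * _ | e p.1 p.2}.

(* Reversal of a dart (well defined since e is symmetric). *)
Definition drev (T : finType) (e : rel T) (d : dart e) : dart e :=
  insubd d ((val d).2, (val d).1).

(* This is the standard
   combinatorial description of a (cellular) embedding of a connected graph
   in an orientable surface. *)
Definition rotation_system (T : finType) (e : rel T) (rho : dart e -> dart e) : Prop :=
  [/\ injective rho,
      forall d, (val (rho d)).1 = (val d).1 &
      forall d d', (val d).1 = (val d').1 -> fconnect rho d d'].

Definition face_perm (T : finType) (e : rel T) (rho : dart e -> dart e) (d : dart e) : dart e :=
  rho (drev d).

Definition nverts (T : finType) (e : rel T) : nat := #|T|.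

Definition nedges (T : finType) (e : rel T) : nat :=
  #|[set E : {set T} | [exists x : T, exists y : T, e x y && (E == [set x; y])]]|.

(* Faces = orbits of the face permutation; the graph with no edge (a single
   vertex) has exactly one face. *)
Definition nfaces (T : finType) (e : rel T) (rho : dart e -> dart e) : nat :=
  if #|{: dart e}| == 0%N then 1%N else fcard (face_perm rho) predT.

(* A planar embedding: a rotation system whose surface has Euler
   characteristic 2 (genus 0, i.e. the sphere). *)
Definition planar_embedding (T : finType) (e : rel T) (rho : dart e -> dart e) : Prop :=
  rotation_system rho /\
  (nverts e)%:Z - (nedges e)%:Z + (nfaces rho)%:Z = 2%:Z.

Definition euler_poly (f0 f1 f2 : nat) : {poly algC} :=
  (f2%:R%:P * 'X^3 + f1%:R%:P * 'X^2 + f0%:R%:P * 'X + 2%:R%:P)%R.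

(* Main.v *)
Require Import Defs.
From HB Require Import structures.
From mathcomp Require Import all_boot all_order all_algebra all_field.
From mathcomp Require Import zify ring.
Import Order.TTheory GRing.Theory Num.Theory.
Local Open Scope ring_scope.
Lemma key (a b : algC) : a \is Num.real -> b \is Num.real ->
  (forall z : algC, (z + 1) * (a * z ^+ 2 + b * z + 2) = 0 -> z \is Num.real)
  <-> 8 * a <= b ^+ 2.
Proof.
move=> ar br; set d := sqrtC (b ^+ 2 - 8 * a).
have dK : d ^+ 2 = b ^+ 2 - 8 * a by rewrite sqrtCK.
have idq : forall z, (2 * a * z + b) ^+ 2 = d ^+ 2 + 4 * a * (a * z ^+ 2 + b * z + 2).
  by move=> z; rewrite dK; ring.
split => [H | Hle z].
  case: (boolP (a == 0)) => [/eqP a0 | a0].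
    by rewrite a0 mulr0 -realEsqr.
  have r8 : 8 * a \is Num.real by rewrite rpredM // realn.
  rewrite real_leNgt ?rpredX //; apply/negP => Hlt.
  pose z := (d - b) / (2 * a).
  have a2 : 2 * a != 0 by rewrite mulf_neq0 // pnatr_eq0.
  have ez : 2 * a * z + b = d by rewrite /z mulrC divfK // subrK.
  have qz : a * z ^+ 2 + b * z + 2 = 0.
    have : 4 * a * (a * z ^+ 2 + b * z + 2) = 0.
      by apply/(addrI (d ^+ 2)); rewrite -idq ez addr0.
    by move/eqP; rewrite !mulf_eq0 (negbTE a0) pnatr_eq0 /= => /eqP.
  have zr : z \is Num.real by apply: H; rewrite qz mulr0.
  have dr : d \is Num.real by rewrite -ez rpredD // rpredM // rpredM // realn.
  move: dr; rewrite realEsqr dK subr_ge0 => Hge.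
  by have := lt_le_trans Hlt Hge; rewrite ltxx.
move/eqP; rewrite mulf_eq0 => /orP [|/eqP q0].
  by rewrite addr_eq0 => /eqP ->; rewrite rpredN rpred1.
have dr : d \is Num.real by by apply: sqrtC_real; rewrite subr_ge0.
case: (boolP (a == 0)) => [/eqP a0 | a0].
  move: q0; rewrite a0 mul0r add0r => /eqP; rewrite addr_eq0 => /eqP bz.
  have b0 : b != 0 by apply/negP => /eqP b0; move: bz; rewrite b0 mul0r => /eqP; rewrite eq_sym oppr_eq0 pnatr_eq0.
  have -> : z = (b * z) / b by rewrite mulrC mulKf.
  by rewrite bz rpredM ?rpredN ?realn ?rpredV.
have a2 : 2 * a != 0 by rewrite mulf_neq0 // pnatr_eq0.
have : (2 * a * z + b - d) * (2 * a * z + b + d) = 0.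
  by rewrite -subr_sqr idq q0 mulr0 addr0 subrr.
have wz : z = ((2 * a * z + b) - b) / (2 * a) by rewrite addrK mulrC mulKf.
move/eqP; rewrite mulf_eq0 => /orP [|] /eqP H; rewrite wz rpredM ?rpredV ?rpredM ?realn // rpredB //.
  by move/eqP: H; rewrite subr_eq0 => /eqP ->.
by move/eqP: H; rewrite addr_eq0 => /eqP ->; rewrite rpredN.
Qed.

Theorem mainTheorem1 (T : finType) (e : rel T) (rho : dart e -> dart e) :
  simple_graph e -> connected_graph e -> planar_embedding rho ->
  ((forall z : algC, root (euler_poly (nverts e) (nedges e) (nfaces rho)) z ->
       z \is Num.real)
   <-> (8 * ((nedges e)%:Z + 2) <= ((nverts e)%:Z + 2) ^+ 2)%R)
  /\
  ((8 * ((nedges e)%:Z + 2) <= ((nverts e)%:Z + 2) ^+ 2)%R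
   <-> (8 * (nfaces rho)%:Z <= ((nverts e)%:Z - 2) ^+ 2)%R).
Proof.
move=> _ _ [_ Heul].
move: Heul; set f0 := nverts e; set f1 := nedges e; set f2 := nfaces rho => Heul.
have Hn : (f1 + 2 = f0 + f2)%N by lia.
have Ez : f1%:Z = f0%:Z + f2%:Z - 2 by lia.
have P2 : (8 * (f1%:Z + 2) <= (f0%:Z + 2) ^+ 2) <-> (8 * f2%:Z <= (f0%:Z - 2) ^+ 2).
  have E : (f0%:Z + 2) ^+ 2 - 8 * (f1%:Z + 2) = (f0%:Z - 2) ^+ 2 - 8 * f2%:Z.
    by rewrite Ez; ring.
  by rewrite -subr_ge0 E subr_ge0.
split => //; rewrite P2.
have -> : (8 * f2%:Z <= (f0%:Z - 2) ^+ 2) = (8 * (f2%:R : algC) <= (f0%:R - 2) ^+ 2).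
  rewrite -(ler_int algC) rmorphM rmorphXn rmorphB /=.
  done.
rewrite -key ?realn ?rpredB ?realn //.
have Ea : (f1%:R : algC) = f0%:R + f2%:R - 2.
  by apply/(addIr 2); rewrite subrK -!natrD Hn.
have Ep : forall z : algC, (euler_poly f0 f1 f2).[z] = (z + 1) * (f2%:R * z ^+ 2 + (f0%:R - 2) * z + 2).
  move=> z; rewrite /euler_poly !(hornerD, hornerM, hornerC, hornerXn, hornerX) Ea; ring.
split => H z Hz; apply: H.
  by rewrite /root Ep Hz.
by apply/eqP; rewrite -Ep.
Qed.
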